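(* Fix a positive odd integer $n$. There exists an integer $C_n$ such that for every prime $p>C_n$ and every $p$-th Fourier coefficient $a_p$ with $[\mathbb Q(a_p):\mathbb Q]=n$, there is a maximal ideal $\mathfrak l$ of $\bar{\mathbb Z}$ whose residue characteristic is different from $p$ and such that $(a_p+p+1)(a_p-p-1)\in\mathfrak l$.
   Context: $\bar{\mathbb Z}$ is the ring of algebraic integers. For a prime $p$, an element $a_p\in\bar{\mathbb Q}$ is called a $p$-th Fourier coefficient if (i) $a_p\in\bar{\mathbb Z}$, (ii) $a_p$ is totally real, and (iii) $|\sigma(a_p)|\le 2\sqrt p$ for every embedding $\sigma:\mathbb Q(a_p)\hookrightarrow\mathbb R$. *)

(* Defs.v *)
From mathcomp Require Import all_boot all_order all_algebra all_field.
Set Implicit Arguments. Unset Strict Implicit. Unset Printing Implicit Defensive.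
Import Order.TTheory GRing.Theory Num.Theory.
Local Open Scope ring_scope.

(* Embeddings of Q(a) into C are exactly restrictions of ring morphisms algC -> algC
   (every embedding of a number field into algC extends to an automorphism of algC). *)
Definition fourier_coeff (p : nat) (a : algC) : Prop :=
  [/\ a \in Aint,
      (forall s : {rmorphism algC -> algC}, s a \is Num.real) &
      (forall s : {rmorphism algC -> algC}, `|s a| <= 2 * sqrtC p%:R)].

Definition deg_over_Q (a : algC) : nat := (size (minCpoly a)).-1.

Definition Zbar_ideal (I : algC -> Prop) : Prop :=
  [/\ forall x, I x -> x \in Aint,
      I 0,
      (forall x y, I x -> I y -> I (x + y)) &
      (forall r x, r \in Aint -> I x -> I (r * x))].

Definition Zbar_maximal_ideal (I : algC -> Prop) : Prop :=
  [/\ Zbar_ideal I, ~ I 1 &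
      forall J, Zbar_ideal J -> (forall x, I x -> J x) -> J 1 \/ (forall x, J x -> I x)].

(* The residue field Zbar/I has characteristic l (l prime) iff l lies in I
   (for a proper ideal). *)
Definition residue_char (I : algC -> Prop) (l : nat) : Prop :=
  prime l /\ I l%:R.

(* Main.v *)
Require Import Defs.
From HB Require Import structures.
From mathcomp Require Import all_boot all_order all_algebra all_field.
From mathcomp Require Import boolp classical_sets.
From mathcomp Require Import zify ring.
Import Order.TTheory GRing.Theory Num.Theory.
Local Open Scope ring_scope.

Lemma conj_aut (a b : algC) : root (minCpoly a) b ->
  exists s : {rmorphism algC -> algC}, s a = b.
Proof.
move=> rb.
have [r Dr] := closed_field_poly_normal (minCpoly a).
rewrite (monicP (minCpoly_monic a)) scale1r in Dr.
have [Qr [QrC [rr Drr genQr]]] := num_field_exists r.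
have [p [Dp mon_p] dvp] := minCpolyP a.
pose pr := map_poly (in_alg Qr) p.
have Qpr: pr \is a polyOver 1%VS.
  by apply/polyOverP=> i; rewrite coef_map memvZ ?memv_line.
have Sinj_poly q : map_poly QrC (map_poly (in_alg Qr) q) = map_poly ratr q.
  rewrite -map_poly_comp; apply: eq_map_poly => c.
  by rewrite /= rmorphZ_num rmorph1 mulr1.
have splitQr: splittingFieldFor 1 pr fullv.
  exists rr => //.
  congr (_ %= _): (eqpxx pr); apply/(map_poly_inj QrC).
  rewrite Sinj_poly -Dp Dr -Drr big_map rmorph_prod /=; apply: eq_bigr => zz _.
  by rewrite map_polyXsubC.
have Qr_ax : FieldExt_isSplittingField _ Qr by constructor; exists pr.
pose L := HB.pack_for (splittingFieldType rat) Qr Qr_ax.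
have ra : a \in r by rewrite -root_prod_XsubC -Dr root_minCpoly.
have rb' : b \in r by rewrite -root_prod_XsubC -Dr.
rewrite -Drr in ra rb'.
case/mapP: ra => a' _ Da. case/mapP: rb' => b' _ Db.
have : root (minPoly 1 (a' : L)) (b' : L).
  set mp := minPoly 1 (a' : L).
  have aP i: mp`_i \in 1%VS by apply/polyOverP; apply: minPolyOver.
  have a_ i := sig_eqW (vlineP _ _ (aP i)).
  pose q := \poly_(i < size mp) sval (a_ i).
  have Dq : map_poly QrC mp = map_poly ratr q.
    apply/polyP=> i; rewrite !coef_map coef_poly /=.
    case: ifP => [_|/negbT]; last first.
      by rewrite -leqNgt => /(nth_default 0) ->; rewrite !rmorph0.
    by case: (a_ i) => c /= ->; rewrite alg_num_field fmorph_rat.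
  have : root (map_poly ratr q) a.
    by rewrite -Dq Da fmorph_root root_minPoly.
  rewrite dvp => /dvdpP[t Dt].
  rewrite -(fmorph_root QrC) -Db Dq Dt rmorphM rootM /=.
  by rewrite -Dp rb orbT.
move=> /(normalField_root_minPoly (sub1v _) (normalFieldf 1) (memvf _)) [g _ Dg].
have [nu Dnu] := extend_algC_subfield_aut (QrC : {rmorphism L -> algC}) g.
exists nu; rewrite Da Db -Dnu /=. 
by rewrite Dg.
Qed.

Lemma horner_drop1 (f : {poly algC}) y : f.[y] = f`_0 + (drop_poly 1 f).[y] * y.
Proof.
rewrite -{1}(poly_take_drop 1 f) hornerD hornerM hornerXn expr1.
have -> : take_poly 1 f = (f`_0)%:P.
  by apply/polyP => i; rewrite coef_take_poly coefC; case: i.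
by rewrite hornerC.
Qed.

Lemma monic_drop1 (f : {poly algC}) : f \is monic -> (1 < size f)%N ->
  drop_poly 1 f \is monic.
Proof.
move=> /monicP mf sf; apply/monicP.
rewrite lead_coefE size_drop_poly coef_drop_poly -mf lead_coefE.
congr (f`_ _); case: (size f) sf => // [[|m]] //= _.
by rewrite addn1.
Qed.

Lemma polyOver_drop1 (f : {poly algC}) :
  f \is a polyOver Num.int -> drop_poly 1 f \is a polyOver Num.int.
Proof. by move=> /polyOverP fS; apply/polyOverP => i; rewrite coef_drop_poly. Qed.

Lemma monic_size1 (f : {poly algC}) : f \is monic -> (size f <= 1)%N -> f`_0 = 1.
Proof.
move=> mf sf; have nz := monic_neq0 mf.
have s1 : size f = 1%N.
  by apply/eqP; rewrite eqn_leq sf lt0n size_poly_eq0 nz.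
by move/monicP: mf; rewrite lead_coefE s1.
Qed.

Lemma ideal_add I u v : Zbar_ideal I -> I u -> I v -> I (u + v).
Proof. by rewrite /Zbar_ideal => -[_ _ H _]; apply: H. Qed.
Lemma ideal_mul I r u : Zbar_ideal I -> r \in Aint -> I u -> I (r * u).
Proof. by rewrite /Zbar_ideal => -[_ _ _ H]; apply: H. Qed.
Lemma ideal_opp I u : Zbar_ideal I -> I u -> I (- u).
Proof. by move=> hI Iu; rewrite -mulN1r; apply: ideal_mul => //; rewrite rpredN Aint1. Qed.
Lemma ideal_sub I u v : Zbar_ideal I -> I u -> I v -> I (u - v).
Proof. by move=> hI Iu Iv; apply: ideal_add => //; apply: ideal_opp. Qed.
Lemma ideal_Aint I u : Zbar_ideal I -> I u -> u \in Aint.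
Proof. by rewrite /Zbar_ideal => -[H _ _ _] /H. Qed.
Lemma ideal0 I : Zbar_ideal I -> I 0.
Proof. by rewrite /Zbar_ideal => -[]. Qed.

Definition primeI (A : algC -> Prop) := forall y w, y \in Aint -> w \in Aint ->
  A (y * w) -> A y \/ A w.

Lemma int_poly_Aint (f : {poly algC}) y : f \is a polyOver Num.int -> y \in Aint ->
  f.[y] \in Aint.
Proof.
move=> fZ yA; apply: rpred_horner => //.
by apply: polyOverS fZ => z; apply: Aint_Cint.
Qed.

Lemma ideal_nat A x : Zbar_ideal A -> x \in Aint -> x != 0 -> A x ->
  exists N : nat, (0 < N)%N /\ A N%:R.
Proof.
move=> hA xA nx0 Ax.
suff H : forall d (f : {poly algC}), (size f <= d)%N -> f \is monic ->
   f \is a polyOver Num.int -> f.[x] = 0 -> exists N : nat, (0 < N)%N /\ A N%:R.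
  apply: (H _ (minCpoly x) (leqnn _) (minCpoly_monic x)).
    by move: xA; rewrite unfold_in.
  by apply/eqP; apply: root_minCpoly.
elim=> [|d IH] f sf mf fZ fx.
  by move: (monic_neq0 mf); rewrite -size_poly_eq0; move: sf; rewrite leqn0 => ->.
have gZ := @polyOver_drop1 f fZ.
move: fx; rewrite horner_drop1 => fx.
have [c0|cn0] := eqVneq (f`_0) 0.
  move: fx; rewrite c0 add0r => /eqP; rewrite mulf_eq0 (negbTE nx0) orbF => /eqP gx.
  have [s1|s2] := leqP (size f) 1.
    by move: c0; rewrite monic_size1 // => /eqP; rewrite oner_eq0.
  apply: (IH (drop_poly 1 f)) => //; last exact: monic_drop1.
  by rewrite size_drop_poly leq_subLR add1n.
have Ac : A (f`_0).
  have -> : f`_0 = - ((drop_poly 1 f).[x] * x) by apply/eqP; rewrite -addr_eq0 fx.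
  rewrite -mulNr; apply: ideal_mul => //.
  by rewrite rpredN; apply: int_poly_Aint.
have /polyOverP/(_ 0%N) := fZ; case/intrP => m Dm.
exists `|m|%N; split.
  by rewrite absz_gt0; apply: contraNneq cn0 => m0; rewrite Dm m0.
move: Ac; rewrite Dm; case: m {Dm} => k.
  by [].
by rewrite NegzE mulrNz => /(@ideal_opp A _ hA); rewrite opprK.
Qed.

Lemma ideal_prime_nat A N : Zbar_ideal A -> ~ A 1 -> primeI A -> (0 < N)%N -> A N%:R ->
  exists l, prime l /\ A l%:R.
Proof.
move=> hA A1 pA; elim: N {-2}N (leqnn N) => [|d IH] N.
  by rewrite leqn0 => /eqP->.
move=> NS N0 AN.
have [N1|N2] := leqP N 1.
  have N1' : N = 1%N by apply/eqP; rewrite eqn_leq N1.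
  by move: AN; rewrite N1' => /A1.
have pl := pdiv_prime N2.
have dN := pdiv_dvd N.
have : A ((pdiv N)%:R * (N %/ pdiv N)%:R).
  by rewrite -natrM mulnC divnK.
case/pA; rewrite ?Aint_Cnat ?rpred_nat //.
  by move=> Al; exists (pdiv N).
move=> AN'; apply: (IH (N %/ pdiv N)%N _ _ AN').
  by rewrite -ltnS; apply: leq_trans NS; apply: ltn_Pdiv; rewrite ?prime_gt1.
by rewrite divn_gt0 ?pdiv_gt0 // dvdn_leq.
Qed.

Lemma inv_mod A y l : Zbar_ideal A -> ~ A 1 -> primeI A -> prime l -> A l%:R ->
  y \in Aint -> ~ A y -> exists2 t, t \in Aint & A (1 - t * y).
Proof.
move=> hA A1 pA pl Al yA nAy.
suff H : forall d (f : {poly algC}), (size f <= d)%N -> f \is monic ->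
   f \is a polyOver Num.int -> A f.[y] -> exists2 t, t \in Aint & A (1 - t * y).
  apply: (H _ (minCpoly y) (leqnn _) (minCpoly_monic y)).
    by move: yA; rewrite unfold_in.
  by move/eqP: (root_minCpoly y) => ->; apply: ideal0.
elim=> [|d IH] f sf mf fZ fx.
  by move: (monic_neq0 mf); rewrite -size_poly_eq0; move: sf; rewrite leqn0 => ->.
have gZ := @polyOver_drop1 f fZ.
have gyA : (drop_poly 1 f).[y] \in Aint by apply: int_poly_Aint.
move: fx; rewrite horner_drop1 => fx.
have /polyOverP/(_ 0%N) := fZ; case/intrP => m Dm.
have [Ac|nAc] := pselect (A (f`_0)).
  have : A ((drop_poly 1 f).[y] * y).
    have -> : (drop_poly 1 f).[y] * y = (f`_0 + (drop_poly 1 f).[y] * y) - f`_0 by ring.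
    exact: ideal_sub.
  case/pA => // Ag.
  have [s1|s2] := leqP (size f) 1.
    by move: Ac; rewrite monic_size1.
  apply: (IH (drop_poly 1 f)) => //; last exact: monic_drop1.
  by rewrite size_drop_poly leq_subLR add1n.
have cop : coprimez m l.
  rewrite coprimezE coprime_sym prime_coprime //=; apply/negP => /dvdnP[k Dk].
  apply: nAc; rewrite Dm.
  have -> : (m%:~R : algC) = (Num.sg m)%:~R * (k%:R * l%:R).
    by rewrite -natrM -Dk {1}(numEsg m) rmorphM /= -abszE.
  apply: ideal_mul => //; first by rewrite Aint_int.
  by apply: ideal_mul => //; apply: Aint_Cnat; apply: natr_nat.
case/coprimezP: cop => [[u v]] /= Euv.
exists (- (u%:~R * (drop_poly 1 f).[y])).
  by rewrite rpredN rpredM ?Aint_int.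
have E1 : 1 = u%:~R * f`_0 + v%:~R * (l%:Z)%:~R :> algC.
  by rewrite Dm -!intrM -intrD Euv.
change ((l%:Z)%:~R) with (l%:R : algC) in E1.
have -> : 1 - - (u%:~R * (drop_poly 1 f).[y]) * y
  = v%:~R * l%:R + u%:~R * (f`_0 + (drop_poly 1 f).[y] * y).
  rewrite {1}E1; ring.
apply: ideal_add => //; apply: ideal_mul => //; rewrite ?Aint_int //.
Qed.

Local Notation GoodI x p B :=
  ([/\ Zbar_ideal B, B x & forall k : nat, ~ B (p%:R ^+ k)]) (only parsing).

Definition extI (A : algC -> Prop) y := fun z => exists m r, [/\ A m, r \in Aint & z = m + r * y].

Lemma extI_ideal A y : Zbar_ideal A -> y \in Aint -> Zbar_ideal (extI A y).
Proof.
move=> hA yA; split.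
- move=> z [m [r [Am rA ->]]]; rewrite rpredD ?rpredM //; exact: ideal_Aint Am.
- by exists 0, 0; rewrite Aint0 mul0r addr0; split => //; apply: ideal0.
- move=> z w [m [r [Am rA ->]]] [m' [r' [Am' rA' ->]]].
  exists (m + m'), (r + r'); split; rewrite ?rpredD //; first exact: ideal_add.
  ring.
- move=> s z sA [m [r [Am rA ->]]]; exists (s * m), (s * r); split; rewrite ?rpredM //.
    exact: ideal_mul.
  ring.
Qed.

Lemma ideal_exists x p : prime p -> x \in Aint -> x != 0 ->
  (forall k z, z \in Aint -> x * z <> p%:R ^+ k) ->
  exists I, [/\ Zbar_maximal_ideal I, (exists l, residue_char I l /\ l <> p) & I x].
Proof.
move=> pp xA x0 Hx.
pose PP := fun B : algC -> Prop => B = set0 \/ GoodI x p B.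
have pA : Aint (p%:R) by apply: Aint_Cnat; apply: natr_nat.
have pkA k : (p%:R ^+ k : algC) \in Aint by rewrite rpredX.
have [A [PA maxA]] : exists A, PP A /\ (forall B, (A `<` B)%classic -> ~ PP B).
  apply: Zorn_bigcup => F FP Ftot.
  have [[X0 [FX0 GX0]]|noG] := pselect (exists X, F X /\ GoodI x p X); last first.
    left; apply/funext => z; apply/propext; split => // -[X FX Xz].
    move: (FP X FX); rewrite /PP; case => [Xe|GX]; first by rewrite Xe in Xz.
    by apply: noG; exists X.
  have Gof X z : F X -> X z -> GoodI x p X.
    by move=> FX Xz; move: (FP X FX); rewrite /PP; case => // Xe; rewrite Xe in Xz.
  right; split; last first.
  - by move=> k [X FX Xk]; case: (Gof X _ FX Xk) => _ _ H; exact: H Xk.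
  - by exists X0 => //; case: GX0.
  split.
  - by move=> z [X FX Xz]; case: (Gof X _ FX Xz) => hX _ _; exact: ideal_Aint Xz.
  - by exists X0 => //; case: GX0 => hX _ _; exact: ideal0.
  - move=> z w [X FX Xz] [Y FY Yw].
    case: (Ftot X Y FX FY) => [XY|YX].
      exists Y => //; case: (Gof Y _ FY Yw) => hY _ _; apply: ideal_add => //; exact: XY.
    exists X => //; case: (Gof X _ FX Xz) => hX _ _; apply: ideal_add => //; exact: YX.
  - move=> r z rA [X FX Xz]; exists X => //; case: (Gof X _ FX Xz) => hX _ _.
    exact: ideal_mul.
pose B0 := fun z => exists2 r, r \in Aint & z = r * x.
have GB0 : GoodI x p B0.
  split.
  - split.
    + by move=> z [r rA ->]; rewrite rpredM.
    + by exists 0; rewrite ?mul0r ?Aint0.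
    + by move=> z w [r rA ->] [s sA ->]; exists (r + s); rewrite ?rpredD ?mulrDl.
    + by move=> s z sA [r rA ->]; exists (s * r); rewrite ?rpredM ?mulrA.
  - by exists 1; rewrite ?mul1r ?Aint1.
  - by move=> k [r rA Dr]; apply: (Hx k r rA); rewrite mulrC.
have GA : GoodI x p A.
  move: PA; rewrite /PP; case=> // A0; exfalso; apply: (maxA B0) => //; last by right.
  rewrite A0; split => // /(_ 0); apply; by exists 0; rewrite ?mul0r ?Aint0.
case: GA => hA Ax nApk.
have maxA' B : GoodI x p B -> (forall z, A z -> B z) -> forall z, B z -> A z.
  move=> GB AB; apply: contrapT => nBA; apply: (maxA B); last by right.
  by split.
have A1 : ~ A 1 by move: (nApk 0%N); rewrite expr0.
have prA : primeI A.
  move=> y w yA wA Ayw; apply: contrapT => /not_orP[nAy nAw].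
  have ext_k z (zA : z \in Aint) : ~ A z -> exists k m r, [/\ A m, r \in Aint & p%:R ^+ k = m + r * z].
    move=> nAz; apply: contrapT => nex.
    have GE : GoodI x p (extI A z).
      split; first exact: extI_ideal.
        by exists x, 0; rewrite mul0r addr0 Aint0.
      move=> k [m [r [Am rA Ek]]]; apply: nex; by exists k, m, r.
    apply: nAz; apply: (maxA' _ GE); first by move=> u Au; exists u, 0; rewrite mul0r addr0 Aint0.
    by exists 0, 1; rewrite Aint1 mul1r add0r; split => //; apply: ideal0.
  have [k [m1 [r1 [Am1 rA1 E1]]]] := ext_k y yA nAy.
  have [j [m2 [r2 [Am2 rA2 E2]]]] := ext_k w wA nAw.
  apply: (nApk (k + j)%N).
  have -> : p%:R ^+ (k + j) = p%:R ^+ j * m1 + (r1 * y) * m2 + (r1 * r2) * (y * w) :> algC.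
    by rewrite exprD E1 E2; ring.
  apply: ideal_add => //; first apply: ideal_add => //.
  - exact: ideal_mul.
  - by apply: ideal_mul => //; rewrite rpredM.
  - by apply: ideal_mul => //; rewrite rpredM.
have [N [N0 AN]] := ideal_nat A x hA xA x0 Ax.
have [l [pl Al]] := ideal_prime_nat A N hA A1 prA N0 AN.
exists A; split => //.
- split => // J hJ AJ.
  have [sub|nsub] := pselect (forall z, J z -> A z); first by right.
  left; have [y [Jy nAy]] : exists y, J y /\ ~ A y.
    apply: contrapT => nex; apply: nsub => z Jz; apply: contrapT => nAz.
    by apply: nex; exists z.
  have yA : y \in Aint by exact: ideal_Aint Jy.
  have [t tA At] := inv_mod A y l hA A1 prA pl Al yA nAy.
  have -> : (1 : algC) = (1 - t * y) + t * y by ring.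
  apply: ideal_add => //; first exact: AJ.
  exact: ideal_mul.
- exists l; split; first by split.
  by move=> lp; apply: (nApk 1%N); rewrite expr1 -lp.
Qed.

Lemma bern_nat m k : (k <= m)%N -> (m ^ k * (m - k) <= (m - 1) ^ k * m)%N.
Proof.
elim: k => [|k IH] km; first by rewrite !expn0 subn0 mul1n.
have km' : (k <= m)%N by apply: ltnW.
have := IH km'.
rewrite !expnS -[((m - 1) * _ * m)%N]mulnA => H.
have H1 : ((m - 1) * ((m - 1) ^ k * m) >= (m - 1) * (m ^ k * (m - k)))%N.
  by rewrite leq_mul2l H orbT.
apply: leq_trans H1.
have -> : ((m - 1) * (m ^ k * (m - k)) = m ^ k * ((m - 1) * (m - k)))%N.
  by rewrite mulnCA.
have -> : (m * m ^ k * (m - k.+1) = m ^ k * (m * (m - k.+1)))%N.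
  by rewrite mulnCA mulnA.
rewrite leq_mul2l; apply/orP; right.
move: km; clear; lia.
Qed.

Lemma B1 n : (0 < n)%N -> ((n.*2) ^ n <= 2 * (n.*2 - 1) ^ n)%N.
Proof.
move=> n0; have hn : (n <= n.*2)%N by rewrite -addnn leq_addr.
have H := @bern_nat n.*2 n hn.
have e : (n.*2 - n = n)%N by rewrite -addnn addnK.
rewrite e in H.
rewrite -(leq_pmul2r n0); apply: (leq_trans H).
by rewrite -mul2n mulnCA mulnA [(2 * _)%N]mulnC.
Qed.

Lemma B2 n : (0 < n)%N -> ((n.*2).+1 ^ n <= 2 * (n.*2) ^ n)%N.
Proof.
move=> n0; have h1 := @B1 n n0.
have h2 : ((n.*2).+1 ^ n * (n.*2 - 1) ^ n <= (n.*2) ^ n * (n.*2) ^ n)%N.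
  rewrite -!expnMn leq_exp2r //.
  move: n0; clear; nia.
have h3 : ((n.*2).+1 ^ n * (n.*2) ^ n <= 2 * (n.*2) ^ n * (n.*2) ^ n)%N.
  apply: (leq_trans (leq_mul (leqnn _) h1)).
  by rewrite mulnCA -mulnA leq_pmul2l.
by move: h3; rewrite leq_pmul2r // expn_gt0 double_gt0 n0.
Qed.

Lemma prod_bounds (r : seq algC) (f : algC -> algC) (M L H : nat) :
  (forall b, b \in r -> L%:R <= M%:R * f b <= H%:R) ->
  (L%:R ^+ size r <= M%:R ^+ size r * \prod_(b <- r) f b) /\
  (M%:R ^+ size r * \prod_(b <- r) f b <= H%:R ^+ size r).
Proof.
elim: r => [|b r IH] hb; first by rewrite big_nil !expr0 mulr1 lexx.
have [lo hi] := IH (fun c cr => hb c (@mem_behead _ (b :: r) _ cr)).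
have /andP[lb hb'] := hb b (mem_head _ _).
have L0 : (0 : algC) <= L%:R by rewrite ler0n.
have Lk0 : (0 : algC) <= L%:R ^+ size r by rewrite exprn_ge0.
rewrite big_cons /= !exprS.
have -> : M%:R * M%:R ^+ size r * (f b * \prod_(j <- r) f j)
   = (M%:R * f b) * (M%:R ^+ size r * \prod_(j <- r) f j) :> algC by ring.
split; first by apply: ler_pM.
apply: ler_pM => //; [exact: le_trans lb | exact: le_trans lo].
Qed.

Lemma factor_bound (n p : nat) (c : algC) : (0 < n)%N -> (36 * n ^ 2 < p)%N ->
  c \is Num.real -> `|c| <= 2 * sqrtC p%:R ->
  ((n.*2 - 1) * p)%N%:R <= (n.*2)%:R * (p%:R + 1 - c) <= ((n.*2).+1 * p)%N%:R.
Proof.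
move=> n0 np cR cs.
set s := sqrtC (p%:R : algC).
have s0 : 0 <= s by rewrite sqrtC_ge0 ler0n.
have ss : s * s = p%:R by rewrite -expr2 sqrtCK.
have s6 : (6 * n)%N%:R <= s.
  have e : (6 * n)%N%:R = sqrtC (((6 * n)%N%:R) ^+ 2) :> algC by rewrite sqrCK ?ler0n.
  rewrite e ler_sqrtC ?qualifE /= ?exprn_ge0 ?ler0n // -natrX ler_nat.
  by apply: ltnW; move: np; rewrite expnMn.
have s1 : 1 <= s.
  by apply: le_trans s6; rewrite ler1n muln_gt0 n0.
have K : (n.*2)%:R * (1 + `|c|) <= p%:R :> algC.
  apply: (@le_trans _ _ ((n.*2)%:R * (1 + 2 * s))).
    by rewrite ler_wpM2l ?ler0n // lerD2l.
  rewrite -ss; apply: (@le_trans _ _ ((6 * n)%N%:R * s)); last first.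
    by rewrite ler_wpM2r.
  have e : (6 * n)%N%:R * s = (n.*2)%:R * s + (n.*2)%:R * (2 * s) :> algC.
    by rewrite -mul2n !natrM; ring.
  rewrite e mulrDr lerD2r mulr1 ler_pMr ?ltr0n ?double_gt0 //.
have K2 : `|(n.*2)%:R * (1 - c)| <= p%:R.
  apply: le_trans K; rewrite normrM normr_nat ler_wpM2l ?ler0n //.
  by apply: le_trans (ler_normB _ _) _; rewrite normr1.
have r1c : (n.*2)%:R * (1 - c) \is Num.real by rewrite rpredM ?rpredB ?realn ?real1.
move: K2; rewrite real_ler_norml // => /andP[Kl Kr].
have e : (n.*2)%:R * (p%:R + 1 - c) = (n.*2)%:R * p%:R + (n.*2)%:R * (1 - c) :> algC.
  by ring.
rewrite e; apply/andP; split.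
  rewrite natrM natrB ?double_gt0 // mulrBl mul1r lerD2l.
  exact: Kl.
by rewrite -addn1 natrM natrD mulrDl mul1r lerD2l.
Qed.

Lemma horner_oddpart (f : {poly algC}) (t : algC) : f \is a polyOver Num.int ->
  t \is a Num.int -> t != 0 -> exists2 D, D \is a Num.int & f.[t] - f.[- t] = t * D.
Proof.
move=> fZ tZ t0.
exists (\sum_(i < size f) f`_i * ((t ^+ i - (- t) ^+ i) / t)).
  apply: rpred_sum => i _; apply: rpredM; first exact: (polyOverP fZ).
  case: (nat_of_ord i) => [|j]; first by rewrite !expr0 subrr mul0r rpred0.
  have -> : (t ^+ j.+1 - (- t) ^+ j.+1) / t = t ^+ j + (- t) ^+ j.
    by rewrite !exprS; field.
  by rewrite rpredD ?rpredX ?rpredN.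
rewrite !horner_coef -sumrB mulr_sumr; apply: eq_bigr => i _.
by field.
Qed.

Lemma prod_dvd (r : seq algC) (f : algC -> algC) (K : algC) :
  (forall b, b \in r -> exists2 w, w \in Aint & f b * w = K) ->
  exists2 W, W \in Aint & \prod_(b <- r) f b * W = K ^+ size r.
Proof.
elim: r => [|b r IH] hb; first by exists 1; rewrite ?Aint1 // big_nil mulr1 expr0.
have [W WA EW] := IH (fun c cr => hb c (@mem_behead _ (b :: r) _ cr)).
have [w wA Ew] := hb b (mem_head _ _).
exists (w * W); first by rewrite rpredM.
by rewrite big_cons exprS -EW -Ew /=; ring.
Qed.

Lemma norm_pow (N W : algC) (p K : nat) : prime p -> N \is a Num.int -> 0 < N ->
  W \in Aint -> N * W = p%:R ^+ K -> exists i, N = (p ^ i)%N%:R.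
Proof.
move=> pp NZ N0 WA E.
have N0' : N != 0 by rewrite gt_eqF.
have DW : W = p%:R ^+ K / N by rewrite -E [N * W]mulrC mulfK.
have WQ : W \in Crat.
  rewrite DW rpred_div ?rpredX ?rpred_nat //.
  by case/intrP: NZ => m ->; rewrite rpred_int.
have WZ := Cint_rat_Aint WQ WA.
have W0 : 0 <= W by rewrite DW divr_ge0 ?exprn_ge0 ?ler0n ?ltW.
have /natrP[m Dm] : N \is a Num.nat by rewrite natrEint NZ ltW.
have /natrP[w Dw] : W \is a Num.nat by rewrite natrEint WZ W0.
move: E; rewrite Dm Dw -natrM -natrX => /eqP; rewrite eqr_nat => /eqP E.
have : (m %| p ^ K)%N by rewrite -E dvdn_mulr.
case/(@dvdn_pfactor p m K pp) => i _ Ei.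
by exists i; rewrite -Ei.
Qed.

Lemma prodN_seq (r : seq algC) (f : algC -> algC) :
  \prod_(b <- r) (- f b) = (-1) ^+ size r * \prod_(b <- r) f b.
Proof.
elim: r => [|b r IH]; first by rewrite !big_nil expr0 mul1r.
by rewrite !big_cons IH /= exprS; ring.
Qed.

Lemma exps (n p i : nat) : (0 < n)%N -> (2 < p)%N ->
  (((n.*2 - 1) * p) ^ n <= (n.*2) ^ n * p ^ i)%N ->
  ((n.*2) ^ n * p ^ i <= ((n.*2).+1 * p) ^ n)%N -> i = n.
Proof.
move=> n0 p2 lo hi.
have b1 := @B1 n n0; have b2 := @B2 n n0.
have m0 : (0 < (n.*2) ^ n)%N by rewrite expn_gt0 double_gt0 n0.
have h1 : (p ^ n <= 2 * p ^ i)%N.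
  rewrite -(leq_pmul2l m0); apply: (leq_trans (leq_mul b1 (leqnn (p ^ n)))).
  rewrite -mulnA -expnMn mulnCA leq_mul2l lo orbT //.
have h2 : (p ^ i <= 2 * p ^ n)%N.
  rewrite -(leq_pmul2l m0); apply: (leq_trans hi).
  rewrite expnMn mulnCA mulnA leq_mul2r b2 orbT //.
have p0 : (0 < p)%N by apply: ltn_trans p2.
case: (ltngtP i n) => // c; exfalso.
  have : (p ^ i.+1 <= p ^ n)%N by rewrite leq_pexp2l.
  rewrite expnS => h3.
  have : (3 * p ^ i <= p * p ^ i)%N by rewrite leq_mul2r p2 orbT.
  move: h1 h3 (expn_gt0 p i); rewrite p0 /=; lia.
have : (p ^ n.+1 <= p ^ i)%N by rewrite leq_pexp2l.
rewrite expnS => h3.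
have : (3 * p ^ n <= p * p ^ n)%N by rewrite leq_mul2r p2 orbT.
move: h2 h3 (expn_gt0 p n); rewrite p0 /=; lia.
Qed.

Theorem lemma2p4 (n : nat) : (0 < n)%N -> odd n ->
  exists C : int, forall (p : nat) (a : algC),
    prime p -> C < p%:Z -> fourier_coeff p a -> deg_over_Q a = n ->
    exists I : algC -> Prop,
      [/\ Zbar_maximal_ideal I,
          (exists l : nat, residue_char I l /\ l <> p) &
          I ((a + p%:R + 1) * (a - p%:R - 1))].
Proof.
move=> n0 nodd; exists (36 * n ^ 2)%N%:Z => p a pp Cp [aA aR aB] deg.
have np : (36 * n ^ 2 < p)%N by rewrite ltz_nat in Cp.
have [r Dr] := closed_field_poly_normal (minCpoly a).
rewrite (monicP (minCpoly_monic a)) scale1r in Dr.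
have sr : size r = n.
  by move: deg; rewrite /deg_over_Q Dr size_prod_XsubC.
have rfacts b : b \in r -> [/\ b \in Aint, `|b| <= 2 * sqrtC p%:R, b \is Num.real &
      exists s : {rmorphism algC -> algC}, s a = b].
  move=> br; have : root (minCpoly a) b by rewrite Dr root_prod_XsubC.
  case/conj_aut => s Ds; rewrite -Ds; split; [by rewrite Aint_aut | exact: aB | exact: aR | by exists s].
have ar : a \in r by rewrite -root_prod_XsubC -Dr root_minCpoly.
pose q : algC := p%:R + 1.
pose L := ((n.*2 - 1) * p)%N; pose H := ((n.*2).+1 * p)%N.
have fb b : b \in r -> (L%:R <= (n.*2)%:R * (q - b) <= H%:R)
   /\ (L%:R <= (n.*2)%:R * (q + b) <= H%:R).
  move=> br; have [_ bB bR _] := rfacts b br; split.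
    exact: factor_bound.
  have -> : q + b = p%:R + 1 - (- b) by rewrite /q opprK.
  by apply: factor_bound; rewrite ?rpredN ?normrN.
have M0 : (0 : algC) < (n.*2)%:R by rewrite ltr0n double_gt0.
have p2 : (2 < p)%N by apply: leq_trans np; move: n0; clear; nia.
have L0 : (0 : algC) < L%:R.
  rewrite ltr0n /L muln_gt0 (ltn_trans _ p2) // andbT subn_gt0.
  by move: n0; clear; lia.
have pos1 b : b \in r -> 0 < q - b.
  move=> br; have [/andP[l _] _] := fb b br.
  by rewrite -(pmulr_rgt0 _ M0); exact: lt_le_trans L0 l.
have pos2 b : b \in r -> 0 < q + b.
  move=> br; have [_ /andP[l _]] := fb b br.
  by rewrite -(pmulr_rgt0 _ M0); exact: lt_le_trans L0 l.
have pA : (p%:R : algC) \in Aint by apply: Aint_Cnat; apply: natr_nat.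
have qA : q \in Aint by rewrite rpredD ?Aint1.
have xA : (a + p%:R + 1) * (a - p%:R - 1) \in Aint.
  by rewrite rpredM ?rpredB ?rpredD ?Aint1.
have x0 : (a + p%:R + 1) * (a - p%:R - 1) != 0.
  rewrite mulf_neq0 //.
    have -> : a + p%:R + 1 = q + a by rewrite /q; ring.
    by rewrite gt_eqF ?pos2.
  have -> : a - p%:R - 1 = - (q - a) by rewrite /q; ring.
  by rewrite oppr_eq0 gt_eqF ?pos1.
apply: ideal_exists => // k z zA E.
have h1 b : b \in r -> exists2 w, w \in Aint & (q - b) * w = p%:R ^+ k.
  move=> br; have [bA _ _ [s Ds]] := rfacts b br.
  have Es := congr1 s E.
  rewrite !rmorphM !rmorphB !rmorphD !rmorph1 rmorphXn rmorph_nat Ds /= in Es.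
  exists (- ((b + q) * s z)); first by rewrite rpredN rpredM ?rpredD ?Aint_aut.
  by rewrite -Es /q; ring.
have h2 b : b \in r -> exists2 w, w \in Aint & (q + b) * w = p%:R ^+ k.
  move=> br; have [bA _ _ [s Ds]] := rfacts b br.
  have Es := congr1 s E.
  rewrite !rmorphM !rmorphB !rmorphD !rmorph1 rmorphXn rmorph_nat Ds /= in Es.
  exists ((b - q) * s z); first by rewrite rpredM ?rpredB ?Aint_aut.
  by rewrite -Es /q; ring.
have [W1 W1A E1] := prod_dvd r (fun b => q - b) _ h1.
have [W2 W2A E2] := prod_dvd r (fun b => q + b) _ h2.
rewrite -exprM in E1; rewrite -exprM in E2.
have PZ : minCpoly a \is a polyOver Num.int by move: aA; rewrite unfold_in.
have qZ : q \is a Num.int by rewrite rpredD ?rpred1 // natr_int.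
have DN1 : (minCpoly a).[q] = \prod_(b <- r) (q - b).
  by rewrite Dr horner_prod; apply: eq_bigr => b _; rewrite hornerXsubC.
have DN2 : (minCpoly a).[- q] = - \prod_(b <- r) (q + b).
  rewrite Dr horner_prod.
  have -> : \prod_(b <- r) ('X - b%:P).[- q] = \prod_(b <- r) (- (q + b)).
    by apply: eq_bigr => b _; rewrite hornerXsubC [RHS]opprD.
  rewrite (prodN_seq r (fun b => q + b)) sr.
  by rewrite -signr_odd nodd expr1 mulN1r.
have N1Z : \prod_(b <- r) (q - b) \is a Num.int by rewrite -DN1 rpred_horner.
have N2Z : \prod_(b <- r) (q + b) \is a Num.int.
  by rewrite -[X in X \is a _]opprK -DN2 rpredN rpred_horner ?rpredN.
have [lo1 hi1] := prod_bounds r (fun b => q - b) n.*2 L H (fun b br => (fb b br).1).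
have [lo2 hi2] := prod_bounds r (fun b => q + b) n.*2 L H (fun b br => (fb b br).2).
rewrite sr in lo1 hi1 lo2 hi2.
have Mn0 : (0 : algC) < (n.*2)%:R ^+ n by rewrite exprn_gt0.
have Ln0 : (0 : algC) < L%:R ^+ n by rewrite exprn_gt0.
have N1p : 0 < \prod_(b <- r) (q - b).
  by rewrite -(pmulr_rgt0 _ Mn0); exact: lt_le_trans Ln0 lo1.
have N2p : 0 < \prod_(b <- r) (q + b).
  by rewrite -(pmulr_rgt0 _ Mn0); exact: lt_le_trans Ln0 lo2.
have [i Ei] := norm_pow _ _ p _ pp N1Z N1p W1A E1.
have [j Ej] := norm_pow _ _ p _ pp N2Z N2p W2A E2.
rewrite Ei -!natrX -natrM in lo1 hi1.
rewrite Ej -!natrX -natrM in lo2 hi2.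
rewrite ler_nat in lo1; rewrite ler_nat in hi1.
rewrite ler_nat in lo2; rewrite ler_nat in hi2.
have ein := exps n p i n0 p2 lo1 hi1.
have ejn := exps n p j n0 p2 lo2 hi2.
have q0 : q != 0 by rewrite /q natr1 pnatr_eq0.
have [D DZ ED] := horner_oddpart (minCpoly a) q PZ qZ q0.
rewrite DN1 DN2 opprK Ei Ej ein ejn in ED.
have qp : 0 < q by rewrite /q natr1 ltr0n.
have D0 : 0 < D.
  by rewrite -(pmulr_rgt0 _ qp) -ED ltr_pwDl ?ltr0n ?expn_gt0 ?(ltn_trans _ p2).
have /natrP[d Dd] : D \is a Num.nat by rewrite natrEint DZ ltW.
have : ((p.+1 * d)%N%:R : algC) = (2 * p ^ n)%N%:R.
  by rewrite natrM natrM -Dd -natr1 -/q -ED mulr_natl mulr2n.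
move/eqP; rewrite eqr_nat => /eqP Epd.
have : (p.+1 %| 2 * p ^ n)%N by rewrite -Epd dvdn_mulr.
rewrite mulnC Gauss_dvdr; last by rewrite coprimeXr // coprimeSn.
move/dvdn_leq => /(_ isT); rewrite ltnS => p1.
by move: p2; rewrite ltnNge (leq_trans p1).
Qed.
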